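(* Let $(\Omega,\mathcal{F})$ be a measurable space, $T:\Omega\to\Omega$ measurable, and $V$ a $T$-invariant upper probability. The following are equivalent: (i) $V$ is ergodic; (ii) there exists $Q\in\operatorname{core}(V)\cap\mathcal{M}^e(T)$ such that for every $P\in\operatorname{core}(V)$, $\lim_{n\to\infty}\frac{1}{n}\sum_{i=0}^{n-1}P(B\cap T^{-i}C)=P(B)Q(C)$ for all $B,C\in\mathcal{F}$; (iii) there exists $Q\in\operatorname{core}(V)\cap\mathcal{M}(T)$ such that for every $P\in\operatorname{core}(V)$, $\lim_{n\to\infty}\frac{1}{n}\sum_{i=0}^{n-1}P(B\cap T^{-i}C)=P(B)Q(C)$ for all $B,C\in\mathcal{F}$.
   Context: A capacity is a monotone map $\mu:\mathcal{F}\to[0,1]$ with $\mu(\emptyset)=0,\mu(\Omega)=1$. An upper probability is a capacity $V$ with $V(A)=\max_{P\in\Lambda}P(A)$ for a weak* (setwise convergence) compact set $\Lambda$ of probabilities; $\operatorname{core}(V)$ is the set of finitely additive normalized $P\le V$ (these are probabilities). $V$ is $T$-invariant if $V(T^{-1}A)=V(A)$; $\mathcal{I}=\{A:T^{-1}A=A\}$; $V$ is ergodic if for each $B\in\mathcal{I}$, $V(B)\in\{0,1\}$ and ($V(B)=0$ or $V(B^c)=0$). $\mathcal{M}(T)$: $T$-invariant probabilities; $\mathcal{M}^e(T)$: those with $P(\mathcal{I})\subset\{0,1\}$. *)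

(* Defs.v *)
From HB Require Import structures.
From mathcomp Require Import all_boot all_order all_algebra.
From mathcomp Require Import all_classical all_reals.
From mathcomp Require Import topology normedtype sequences measure.
Set Implicit Arguments. Unset Strict Implicit. Unset Printing Implicit Defensive.
Import Order.TTheory GRing.Theory Num.Theory numFieldNormedType.Exports.
Local Open Scope classical_set_scope.
Local Open Scope ring_scope.

Section Defs.
Context {d : measure_display} {X : measurableType d} {R : realType}.

(* Real-valued set functions on X; only their values on measurable sets matter. *)

Definition capacity (mu : set X -> R) : Prop :=
  [/\ mu set0 = 0, mu setT = 1,
      (forall A, measurable A -> 0 <= mu A <= 1) &
      (forall A B, measurable A -> measurable B -> A `<=` B -> mu A <= mu B)].

Definition fin_add_prob (P : set X -> R) : Prop :=
  [/\ P setT = 1,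
      (forall A, measurable A -> 0 <= P A) &
      (forall A B, measurable A -> measurable B -> A `&` B = set0 ->
         P (A `|` B) = P A + P B)].

Definition is_prob (P : set X -> R) : Prop :=
  [/\ P set0 = 0, P setT = 1,
      (forall A, measurable A -> 0 <= P A) &
      (forall F : nat -> set X, (forall n, measurable (F n)) ->
         trivIset setT F -> measurable (\bigcup_n F n) ->
         (fun n => \sum_(i < n) P (F i)) @ \oo --> P (\bigcup_n F n))].

(** measurable sets, and the setwise-convergence (weak-star) topology:
    the topology of pointwise convergence on measurable sets *)
Definition msets := {A : set X | measurable A}.

Definition setwise_eval (P : set X -> R) : {ptws msets -> R} :=
  fun A => P (proj1_sig A).

Definition setwise_compact (L : set (set X -> R)) : Prop :=
  compact (setwise_eval @` L).

Definition upper_probability (V : set X -> R) : Prop :=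
  capacity V /\
  exists L : set (set X -> R),
    [/\ L `<=` is_prob, setwise_compact L &
        forall A, measurable A ->
          (exists2 P, L P & P A = V A) /\ (forall P, L P -> P A <= V A)].

Definition core (V : set X -> R) : set (set X -> R) :=
  [set P | fin_add_prob P /\ forall A, measurable A -> P A <= V A].

Definition invariant_fun (T : X -> X) (mu : set X -> R) : Prop :=
  forall A, measurable A -> mu (T @^-1` A) = mu A.

Definition invariant_sets (T : X -> X) : set (set X) :=
  [set A | measurable A /\ T @^-1` A = A].

Definition ergodic_cap (T : X -> X) (V : set X -> R) : Prop :=
  forall B, invariant_sets T B ->
    (V B = 0 \/ V B = 1) /\ (V B = 0 \/ V (~` B) = 0).

Definition MT (T : X -> X) : set (set X -> R) :=
  [set P | is_prob P /\ invariant_fun T P].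

Definition MeT (T : X -> X) : set (set X -> R) :=
  [set P | MT T P /\ forall B, invariant_sets T B -> P B = 0 \/ P B = 1].

Definition avg_limit (T : X -> X) (P Q : set X -> R) : Prop :=
  forall B C, measurable B -> measurable C ->
    (fun n : nat => n%:R^-1 * \sum_(i < n) P (B `&` (iter i T) @^-1` C))
      @ \oo --> P B * Q C.

End Defs.

(* Main.v *)
Require Import Defs.
From HB Require Import structures.
From mathcomp Require Import all_boot all_order all_algebra.
From mathcomp Require Import all_classical all_reals.
From mathcomp Require Import topology normedtype sequences measure.
From mathcomp Require Import ring lra.
Set Implicit Arguments. Unset Strict Implicit. Unset Printing Implicit Defensive.
Import Order.TTheory GRing.Theory Num.Theory numFieldNormedType.Exports.
Local Open Scope classical_set_scope.
Local Open Scope ring_scope.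
Lemma cvgR_uniq {R : realType} {T} {F : set_system T} {FF : ProperFilter F}
  (f : T -> R) (a b : R) : f @ F --> a -> f @ F --> b -> a = b.
Proof. move=> h1 h2; exact: (cvg_unique (@Rhausdorff R) h1 h2). Qed.

Lemma cvg_eqf {T} {U : topologicalType} {F : set_system T} (f g : T -> U) (l : U) :
  (forall n, f n = g n) -> f @ F --> l -> g @ F --> l.
Proof. by move=> e; have -> : g = f by apply: funext => n; rewrite e. Qed.

Section Basic.
Context {d : measure_display} {X : measurableType d} {R : realType}.
Implicit Types (P Q : set X -> R) (A B : set X).

Definition fadd (f : set X -> R) := forall A B, measurable A -> measurable B ->
  A `&` B = set0 -> f (A `|` B) = f A + f B.

Lemma fadd0 f : fadd f -> f set0 = 0.
Proof.
move=> h; have := h set0 set0 measurable0 measurable0 (setI0 _).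
rewrite setU0 => e; lra.
Qed.

Lemma faddD f A B : fadd f -> measurable A -> measurable B -> B `<=` A ->
  f (A `\` B) = f A - f B.
Proof.
move=> h mA mB BA; rewrite -{2}(setDKU BA) h //; first by rewrite addrK.
- exact: measurableD.
- by apply/seteqP; split => x //= [[]].
Qed.

Lemma faddUI f A B : fadd f -> measurable A -> measurable B ->
  f (A `|` B) + f (A `&` B) = f A + f B.
Proof.
move=> h mA mB.
have e1 : A `|` B = A `|` (B `\` A).
  by apply/seteqP; split => x /=; case: (pselect (A x)) => ? [] ?; tauto.
have e2 : B = (B `&` A) `|` (B `\` A).
  by apply/seteqP; split => x /=; case: (pselect (A x)) => ?; tauto.
have mBA : measurable (B `\` A) by exact: measurableD.
rewrite e1 h //; last by apply/seteqP; split => x //= [? []].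
have e3 : f B = f (B `&` A) + f (B `\` A).
  rewrite {1}e2 h //; first exact: measurableI.
  by apply/seteqP; split => x //= [[? ?] [? ?]].
by rewrite e3 setIC; lra.
Qed.

Lemma fa_fadd P : fin_add_prob P -> fadd P.
Proof. by case. Qed.

Lemma fa_ge0 P A : fin_add_prob P -> measurable A -> 0 <= P A.
Proof. by case=> _ h _ /h. Qed.

Lemma fa_le P A B : fin_add_prob P -> measurable A -> measurable B ->
  A `<=` B -> P A <= P B.
Proof.
move=> hP mA mB AB; have := faddD (fa_fadd hP) mB mA AB.
have := fa_ge0 hP (measurableD mB mA); move=> h1 h2; rewrite h2 in h1; lra.
Qed.

Lemma fa_le1 P A : fin_add_prob P -> measurable A -> P A <= 1.
Proof. by move=> hP mA; case: (hP) => <- _ _; apply: fa_le. Qed.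

Lemma fa_compl P A : fin_add_prob P -> measurable A -> P (~` A) = 1 - P A.
Proof.
move=> hP mA; rewrite -setTD faddD //; [by case: hP => ->|exact: fa_fadd].
Qed.

End Basic.
Section Cont.
Context {d : measure_display} {X : measurableType d} {R : realType}.
Implicit Types (P Q W : set X -> R) (A B : set X).

Definition cont0 (f : set X -> R) := forall A : nat -> set X,
  (forall n, measurable (A n)) -> (forall n, A n.+1 `<=` A n) ->
  \bigcap_n A n = set0 -> f (A n) @[n --> \oo] --> 0.

Lemma is_prob_fa P : is_prob P -> fin_add_prob P.
Proof.
case=> P0 P1 Pge0 Pca; split => // A B mA mB AB.
pose F n := if n is 0 then A else if n is 1 then B else set0.
have mF n : measurable (F n).
  by case: n => [|[|n]] /=; [exact: mA|exact: mB|exact: measurable0].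
have tF : trivIset setT F.
  move=> [|[|i]] [|[|j]] _ _ //= [x] //=; try by case.
  - by move=> h; have : (A `&` B) x by []; rewrite AB.
  - by move=> [h1 h2]; have : (A `&` B) x by []; rewrite AB.
have UF : \bigcup_n F n = A `|` B.
  apply/seteqP; split => x /=.
  - by move=> [[|[|n]]] //= _ h; [left|right].
  - by case=> h; [exists 0%N|exists 1%N].
have mAB : measurable (A `|` B) by exact: measurableU.
have := Pca F mF tF; rewrite UF => /(_ mAB) h1.
have h2 : (fun n => \sum_(i < n) P (F i)) @ \oo --> P A + P B.
  apply: cvg_near_cst; exists 2%N => // n /= n2.
  rewrite -(subnK n2) addn2 !big_ord_recl /= big1 ?addr0 //.
exact: (cvgR_uniq h1 h2).
Qed.

Lemma decr_sub (A : nat -> set X) : (forall n, A n.+1 `<=` A n) ->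
  forall m n, (m <= n)%N -> A n `<=` A m.
Proof.
move=> h m n /subnK <-; elim: (n - m)%N => [|k ih] //=.
by rewrite addSn; apply: subset_trans ih.
Qed.

Lemma is_prob_cont0 P : is_prob P -> cont0 P.
Proof.
move=> hP; have fP := is_prob_fa hP; case: hP => P0 P1 Pge0 Pca.
move=> A mA dA IA.
pose F i := A i `\` A i.+1.
have mF i : measurable (F i) by exact: measurableD.
have tF : trivIset setT F.
  move=> i j _ _ [x [[Aix nAi1x] [Ajx nAj1x]]].
  apply/eqP; rewrite eqn_leq; apply/andP; split; rewrite leqNgt; apply/negP => lt.
  - by apply: nAj1x; apply: (decr_sub dA lt).
  - by apply: nAi1x; apply: (decr_sub dA lt).
have UF : \bigcup_n F n = A 0%N.
  apply/seteqP; split => x /=.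
  - by move=> [i _ [Aix _]]; apply: (decr_sub dA (leq0n i)).
  - move=> A0x; have [m nAm] : exists m, ~ A m x.
      apply: contrapT => h; have : (\bigcap_n A n) x.
        by move=> n _; apply: contrapT => h'; apply: h; exists n.
      by rewrite IA.
    elim: m nAm => [|m ih] nAm; first by [].
    case: (pselect (A m x)) => h; first by exists m.
    exact: ih.
have sF n : \sum_(i < n) P (F i) = P (A 0%N) - P (A n).
  elim: n => [|n ih]; first by rewrite big_ord0 subrr.
  rewrite big_ord_recr /= ih /F faddD //; [|exact: fa_fadd]; lra.
have := Pca F mF tF; rewrite UF => /(_ (mA 0%N)).
under eq_fun do rewrite sF.
move=> h.
have h2 : (fun n => P (A 0%N) - (P (A 0%N) - P (A n))) @ \oo --> P (A 0%N) - P (A 0%N).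
  apply: cvgB => //; exact: cvg_cst.
rewrite subrr in h2; by apply: cvg_eqf h2 => n /=; lra.
Qed.

Lemma fa_cont0_prob P : fin_add_prob P -> cont0 P -> is_prob P.
Proof.
move=> fP cP; have P0 := fadd0 (fa_fadd fP).
split => //; [by case: fP|by move=> A; apply: fa_ge0|].
move=> F mF tF mU.
pose S n := \bigcup_(i in [set k | (k < n)%N]) F i.
have mS n : measurable (S n) by apply: bigcup_measurable => k _; exact: mF.
have SS n : S n.+1 = S n `|` F n.
  apply/seteqP; split => x /=.
  - move=> [i /= ]; rewrite ltnS leq_eqVlt => /orP[/eqP -> | lt] Fx; first by right.
    by left; exists i.
  - case=> [[i /= lt Fx]|Fx]; first by exists i => //=; apply: ltnW.
    by exists n => /=.
have sF n : \sum_(i < n) P (F i) = P (S n).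
  elim: n => [|n ih].
    rewrite big_ord0; suff -> : S 0%N = set0 by [].
    by apply/seteqP; split => x //= [].
  rewrite big_ord_recr /= ih SS (fa_fadd fP) //.
  apply/seteqP; split => x //= [[i /= lt Fix] Fnx].
  have := tF i n I I; rewrite /= => /(_ (ex_intro _ x (conj Fix Fnx))) ein.
  by move: lt; rewrite ein ltnn.
under eq_fun do rewrite sF.
pose D n := \bigcup_n F n `\` S n.
have mD n : measurable (D n) by exact: measurableD.
have dD n : D n.+1 `<=` D n.
  by move=> x [Ux nSx]; split => // Sx; apply: nSx; rewrite SS; left.
have ID : \bigcap_n D n = set0.
  apply/seteqP; split => x //= h; have [Ux _] := h 0%N I.
  case: Ux => i _ Fix; have [_] := h i.+1 I; apply.
  by rewrite SS; right.
have := cP D mD dD ID => h.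
have e n : P (S n) = P (\bigcup_n F n) - P (D n).
  rewrite /D faddD //; [lra|exact: fa_fadd|].
  by move=> x [i /= _ Fix]; exists i.
have h2 : (fun n => P (\bigcup_n F n) - P (D n)) @ \oo --> P (\bigcup_n F n) - 0.
  apply: cvgB => //; exact: cvg_cst.
rewrite subr0 in h2; apply: cvg_eqf h2 => n; by rewrite e.
Qed.

Lemma cont0_le P W : fin_add_prob P -> (forall A, measurable A -> P A <= W A) ->
  cont0 W -> cont0 P.
Proof.
move=> fP PW cW A mA dA IA; have := cW A mA dA IA.
apply: (squeeze_cvgr _ (cvg_cst 0)); apply: nearW => n.
by rewrite (fa_ge0 fP (mA n)) PW.
Qed.
End Cont.
HB.instance Definition _ d (X : measurableType d) := gen_eqMixin (@msets d X).

Section Topo.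
Context {d : measure_display} {X : measurableType d} {R : realType}.
Local Notation M := (@msets d X).
Local Notation FS := {ptws M -> R}.

Definition K01 : set FS := [set h | forall A, `[0, 1]%classic (h A)].

Lemma K01_compact : compact K01.
Proof. exact: (@tychonoff M (fun _ => R) (fun _ => `[0, 1]%classic) (fun _ => @segment_compact R 0 1)). Qed.

Lemma cluster_closed {T : topologicalType} (F : set_system T) (p : T) (S : set T) :
  cluster F p -> closed S -> F S -> S p.
Proof.
move=> cFp cS FS; rewrite clusterE in cFp.
by rewrite (closure_id S).1 //; apply: cFp.
Qed.

Lemma exists_cluster (f : nat -> FS) : (forall n, K01 (f n)) ->
  exists g, K01 g /\ cluster (f @ \oo) g.
Proof.
move=> hf.
have PF : ProperFilter (f @ \oo) by exact: fmap_proper_filter.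
have FK : (f @ \oo) K01 by exists 0%N => // n _; exact: hf.
by have [g [Kg cg]] := K01_compact PF FK; exists g.
Qed.

Lemma clus_le (f : nat -> FS) g (Phi : FS -> R) c : cluster (f @ \oo) g ->
  continuous Phi -> (\forall n \near \oo, Phi (f n) <= c) -> Phi g <= c.
Proof.
move=> cg cPhi ev.
have : closed (Phi @^-1` [set x | x <= c]).
  by apply: preimage_closed => //; exact: closed_le.
by move/(cluster_closed cg); apply.
Qed.

Lemma clus_ge (f : nat -> FS) g (Phi : FS -> R) c : cluster (f @ \oo) g ->
  continuous Phi -> (\forall n \near \oo, c <= Phi (f n)) -> c <= Phi g.
Proof.
move=> cg cPhi ev.
have : closed (Phi @^-1` [set x | c <= x]).
  by apply: preimage_closed => //; exact: closed_ge.
by move/(cluster_closed cg); apply.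
Qed.

Lemma cont_proj (a : M) : continuous (fun h : FS => h a).
Proof. exact: proj_continuous. Qed.

Lemma cont_add3 (a b c : M) : continuous (fun h : FS => h a + h b - h c).
Proof.
move=> h.
have h1 := @cont_proj a h. have h2 := @cont_proj b h. have h3 := @cont_proj c h.
have := cvgB (cvgD h1 h2) h3. exact.
Qed.

Lemma cont_sub (a b : M) : continuous (fun h : FS => h a - h b).
Proof.
move=> h; have h1 := @cont_proj a h; have h2 := @cont_proj b h.
have := cvgB h1 h2. exact.
Qed.

End Topo.
Lemma ev_inv_le {R : realType} (e : R) : 0 < e ->
  exists N, forall n, (N <= n)%N -> n%:R^-1 <= e.
Proof.
move=> e0; have [N _ hN] := nbhs_infty_gtr (e^-1).
exists N => n Nn; have h := hN n Nn.
have n0 : 0 < n%:R :> R by apply: lt_trans h; rewrite invr_gt0.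
by rewrite -(invrK e) lef_pV2 ?inE ?unitfE ?invr_gt0 ?ltW // ?posrE ?invr_gt0.
Qed.

Lemma avg_bounds {R : realType} (n : nat) (a : nat -> R) :
  (forall i, 0 <= a i <= 1) -> 0 <= n%:R^-1 * \sum_(i < n) a i <= 1.
Proof.
move=> ha; case: n => [|n]; first by rewrite big_ord0 mulr0 lexx ler01.
have s0 : 0 <= \sum_(i < n.+1) a i by apply: sumr_ge0 => i _; case/andP: (ha i).
have s1 : \sum_(i < n.+1) a i <= n.+1%:R.
  apply: le_trans (_ : \sum_(i < n.+1) (1 : R) <= _).
    by apply: ler_sum => i _; case/andP: (ha i).
  by rewrite sumr_const card_ord.
apply/andP; split; first by rewrite mulr_ge0 // invr_ge0.
rewrite ler_pdivrMl ?ltr0n // mulr1 //.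
Qed.

Lemma tele {R : realType} (a : nat -> R) n :
  \sum_(i < n) a i.+1 - \sum_(i < n) a i = a n - a 0%N.
Proof.
rewrite -sumrB -(big_mkord xpredT (fun i => a i.+1 - a i)).
exact: telescope_sumr.
Qed.
Section Main.
Context {d : measure_display} {X : measurableType d} {R : realType}.
Variables (T : X -> X) (V : set X -> R).
Hypothesis mT : measurable_fun setT T.
Hypothesis uV : upper_probability V.
Hypothesis iV : invariant_fun T V.
Local Notation M := (@msets d X).
Local Notation FS := {ptws M -> R}.

Lemma mpreT A : measurable A -> measurable (T @^-1` A).
Proof. by move=> mA; rewrite -[_ @^-1` _]setTI; apply: mT. Qed.

Lemma mpre_iter n A : measurable A -> measurable (iter n T @^-1` A).
Proof.
elim: n A => [|n ih] A mA //=.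
exact: (ih (T @^-1` A) (mpreT mA)).
Qed.

Lemma inv_iter (f : set X -> R) n A : invariant_fun T f -> measurable A ->
  f (iter n T @^-1` A) = f A.
Proof.
move=> hf; elim: n A => [|n ih] A mA //=.
have -> : iter n.+1 T @^-1` A = iter n T @^-1` (T @^-1` A) by [].
by rewrite ih ?hf //; exact: mpreT.
Qed.

Lemma capV : capacity V.
Proof. by case: uV. Qed.

Lemma V_ge0 A : measurable A -> 0 <= V A.
Proof. by case: capV => _ _ h _ /h /andP[]. Qed.

Lemma V_mono A B : measurable A -> measurable B -> A `<=` B -> V A <= V B.
Proof. by case: capV => _ _ _; apply. Qed.

Lemma V_cont0 : cont0 V.
Proof.
case: uV => _ [L [LP cL hL]].
move=> A mA dA IA.
have mono n m : (n <= m)%N -> V (A m) <= V (A n).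
  by move=> nm; apply: V_mono => //; exact: decr_sub.
suff claim : forall e, 0 < e -> exists N, V (A N) < e.
  apply/cvgrPdist_lt => e e0; have [N hN] := claim e e0.
  exists N => // n /= Nn; rewrite sub0r normrN ger0_norm ?V_ge0 //.
  exact: le_lt_trans (mono _ _ Nn) hN.
move=> e e0; apply: contrapT => hne.
have geN N : e <= V (A N) by rewrite leNgt; apply/negP => h; apply: hne; exists N.
have /choice [Pf hPf] : forall N, exists P, L P /\ P (A N) = V (A N).
  by move=> N; have [[P LP0 PA] _] := hL _ (mA N); exists P.
pose f N : FS := setwise_eval (Pf N).
have PF : ProperFilter (f @ \oo) by exact: fmap_proper_filter.
have FK : (f @ \oo) (setwise_eval @` L).
  by exists 0%N => // n _; exists (Pf n) => //; case: (hPf n).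
have [_ [[Ps LPs <-] cg]] := cL _ PF FK.
have fPs : fin_add_prob Ps by apply: is_prob_fa; exact: LP.
have hj j : e <= Ps (A j).
  have := @clus_ge _ _ _ f (setwise_eval Ps) (fun h => h (exist _ (A j) (mA j))) e cg
    (@cont_proj _ _ _ _).
  apply; exists j => // n /= jn; rewrite /f /setwise_eval /=.
  have [LPn Pn] := hPf n; apply: (le_trans (geN n)); rewrite -Pn.
  apply: fa_le => //; first by apply: is_prob_fa; exact: LP.
  exact: decr_sub.
have := is_prob_cont0 (LP _ LPs) mA dA IA => hc.
have : e <= 0.
  have cg' : closed [set x : R | e <= x] by exact: closed_ge.
  have ev : \forall n \near \oo, [set x : R | e <= x] (Ps (A n)).
    by exists 0%N => // n _; exact: hj.
  exact: (closed_cvg _ cg' ev 0 hc).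
by rewrite leNgt e0.
Qed.


Lemma L_core : exists L : set (set X -> R), [/\ L `<=` core V,
  L `<=` is_prob, setwise_compact L &
  forall A, measurable A -> exists2 P, L P & P A = V A].
Proof.
case: uV => _ [L [LP cL hL]]; exists L; split => //.
- move=> P LP0; split; first by apply: is_prob_fa; exact: LP.
  by move=> A mA; have [_] := hL A mA; apply.
- by move=> A mA; have [] := hL A mA.
Qed.

Lemma core_cont0 P : core V P -> cont0 P.
Proof. by case=> fP PV; exact: (cont0_le fP PV V_cont0). Qed.

Lemma core_prob P : core V P -> is_prob P.
Proof. by move=> cP; apply: fa_cont0_prob (core_cont0 cP); case: cP. Qed.

Lemma core_fa P : core V P -> fin_add_prob P.
Proof. by case. Qed.

Lemma core_erg P : ergodic_cap T V -> core V P ->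
  forall E, invariant_sets T E -> (P E = 0 \/ P E = 1).
Proof.
move=> eV [fP PV] E iE; have [mE _] := iE; have [_ [h|h]] := eV E iE.
- left; apply/eqP; rewrite eq_le (fa_ge0 fP mE) andbT -h; exact: PV.
- have mC : measurable (~` E) by exact: measurableC.
  have : P (~` E) = 0.
    apply/eqP; rewrite eq_le (fa_ge0 fP mC) andbT -h; exact: PV.
  rewrite fa_compl // => h'; right; lra.
Qed.

Definition avgP (P : set X -> R) (B : set X) (n : nat) : FS :=
  fun A => n%:R^-1 * \sum_(i < n) P (B `&` (iter i T) @^-1` (sval A)).

Lemma avg_K01 P B n : core V P -> measurable B -> K01 (avgP P B n).
Proof.
move=> [fP _] mB A; rewrite /avgP /= in_itv /=.
apply: (@avg_bounds R n (fun i => P (B `&` iter i T @^-1` sval A))) => i.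
have m : measurable (B `&` iter i T @^-1` sval A).
  by apply: measurableI => //; apply: mpre_iter; exact: (svalP A).
by rewrite (fa_ge0 fP m) (fa_le1 fP m).
Qed.


Lemma mpre_iterI B n (A : M) : measurable B ->
  measurable (B `&` iter n T @^-1` sval A).
Proof. by move=> mB; apply: measurableI => //; apply: mpre_iter; exact: (svalP A). Qed.

Lemma avg_add P B n (a b c : M) : core V P -> measurable B ->
  sval c = sval a `|` sval b -> sval a `&` sval b = set0 ->
  avgP P B n c = avgP P B n a + avgP P B n b.
Proof.
move=> [fP _] mB ec dab; rewrite /avgP -mulrDr -big_split /=; congr (_ * _).
apply: eq_bigr => i _; rewrite ec preimage_setU setIUr (fa_fadd fP) //.
- exact: mpre_iterI.
- exact: mpre_iterI.
- apply/seteqP; split => x //= [[_ h1] [_ h2]].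
  by have : (sval a `&` sval b) (iter i T x) by []; rewrite dab.
Qed.

Lemma avg_setT P B n : (0 < n)%N -> avgP P B n (exist _ setT measurableT) = P B.
Proof.
move=> n0; rewrite /avgP /=.
under eq_bigr do rewrite preimage_setT setIT.
rewrite sumr_const card_ord -[P B *+ n]mulr_natr mulrCA mulVf ?mulr1 //.
by rewrite pnatr_eq0 -lt0n.
Qed.

Lemma avg_inv P B n (A AT : M) : sval AT = T @^-1` sval A ->
  avgP P B n AT - avgP P B n A =
  n%:R^-1 * (P (B `&` iter n T @^-1` sval A) - P (B `&` iter 0 T @^-1` sval A)).
Proof.
move=> eA; rewrite /avgP -mulrBr eA.
by rewrite -(tele (fun i => P (B `&` iter i T @^-1` sval A))).
Qed.

Lemma avg_le_V P n (A : M) : core V P -> avgP P setT n A <= V (sval A).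
Proof.
move=> [fP PV]; rewrite /avgP; case: n => [|n].
  by rewrite big_ord0 mulr0; apply: V_ge0; exact: (svalP A).
have mA := svalP A.
apply: le_trans (_ : n.+1%:R^-1 * \sum_(i < n.+1) V (sval A) <= _).
  apply: ler_wpM2l; first by rewrite invr_ge0.
  apply: ler_sum => i _; rewrite setTI -(inv_iter i iV mA); apply: PV.
  exact: mpre_iter.
rewrite sumr_const card_ord -[V (sval A) *+ n.+1]mulr_natr mulrCA mulVf ?mulr1 //.
by rewrite pnatr_eq0.
Qed.

Lemma avg_mono P B n (A : M) : core V P -> measurable B ->
  avgP P B n A <= avgP P setT n A.
Proof.
move=> [fP PV] mB; rewrite /avgP; apply: ler_wpM2l; first by rewrite invr_ge0.
apply: ler_sum => i _; apply: fa_le => //; try exact: mpre_iterI.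
by move=> x [].
Qed.


Definition ext (g : FS) : set X -> R := fun A =>
  if pselect (measurable A) is left mA then g (exist _ A mA) else 0.

Lemma ext_val g A (mA : measurable A) : ext g A = g (exist _ A mA).
Proof.
rewrite /ext; case: pselect => [mA'|//].
by rewrite (Prop_irrelevance mA' mA).
Qed.

Lemma ev_sub (p : nat -> Prop) (phi : nat -> nat) : (forall k, (k <= phi k)%N) ->
  (\forall n \near \oo, p n) -> \forall k \near \oo, p (phi k).
Proof.
move=> hphi [N _ hN]; exists N => // k /= Nk; apply: hN.
exact: leq_trans Nk (hphi k).
Qed.

Lemma ev_all (p : nat -> Prop) : (forall n, p n) -> \forall n \near \oo, p n.
Proof. by move=> h; exists 0%N => // n _; exact: h. Qed.

Lemma small_diff (c x y e : R) : 0 <= x <= 1 -> 0 <= y <= 1 -> 0 <= c <= e ->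
  -e <= c * (x - y) <= e.
Proof. move=> /andP[? ?] /andP[? ?] /andP[? ?]; apply/andP; split; nra. Qed.

Section ClusterProps.
Variables (P : set X -> R) (B : set X) (phi : nat -> nat) (g : FS).
Hypotheses (cP : core V P) (mB : measurable B) (hphi : forall k, (k <= phi k)%N).
Hypothesis cg : cluster ((fun k => avgP P B (phi k)) @ \oo) g.
Let f := fun k => avgP P B (phi k).

Lemma cl_01 A : measurable A -> 0 <= ext g A <= 1.
Proof.
move=> mA; rewrite ext_val; apply/andP; split.
- apply: (@clus_ge _ _ _ f g (fun h => h (exist _ A mA)) 0 cg (@cont_proj _ _ _ _)).
  by apply: ev_all => n; have := avg_K01 (phi n) cP mB (exist _ A mA); rewrite /= in_itv /= => /andP[].
- apply: (@clus_le _ _ _ f g (fun h => h (exist _ A mA)) 1 cg (@cont_proj _ _ _ _)).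
  by apply: ev_all => n; have := avg_K01 (phi n) cP mB (exist _ A mA); rewrite /= in_itv /= => /andP[].
Qed.

Lemma cl_fadd : fadd (ext g).
Proof.
move=> A1 A2 m1 m2 d12.
have m12 : measurable (A1 `|` A2) by exact: measurableU.
rewrite !ext_val.
set a := exist _ A1 m1; set b := exist _ A2 m2; set c := exist _ _ m12.
have e n : avgP P B n a + avgP P B n b - avgP P B n c = 0.
  by rewrite (@avg_add P B n a b c) // subrr.
have h1 : g a + g b - g c <= 0.
  apply: (@clus_le _ _ _ f g _ 0 cg (@cont_add3 _ _ _ a b c)).
  by apply: ev_all => n; rewrite /f e.
have h2 : 0 <= g a + g b - g c.
  apply: (@clus_ge _ _ _ f g _ 0 cg (@cont_add3 _ _ _ a b c)).
  by apply: ev_all => n; rewrite /f e.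
lra.
Qed.

Lemma cl_setT : ext g setT = P B.
Proof.
rewrite (ext_val _ measurableT).
have ev : \forall k \near \oo, f k (exist _ setT measurableT) = P B.
  exists 1%N => // k /= k1; rewrite /f avg_setT //.
  exact: leq_trans k1 (hphi k).
apply/eqP; rewrite eq_le; apply/andP; split.
- apply: (@clus_le _ _ _ f g (fun h => h (exist _ setT measurableT)) _ cg (@cont_proj _ _ _ _)).
  by apply: filterS ev => n ->.
- apply: (@clus_ge _ _ _ f g (fun h => h (exist _ setT measurableT)) _ cg (@cont_proj _ _ _ _)).
  by apply: filterS ev => n ->.
Qed.

Lemma cl_inv : invariant_fun T (ext g).
Proof.
move=> A mA; have mTA := mpreT mA; rewrite !ext_val.
set a := exist _ A mA; set b := exist _ _ mTA.
have h e : 0 < e -> - e <= g b - g a <= e.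
  move=> e0; have [N hN] := ev_inv_le e0.
  have ev : \forall k \near \oo, - e <= f k b - f k a <= e.
    apply: (@ev_sub (fun n => - e <= avgP P B n b - avgP P B n a <= e) phi hphi).
    exists N => // n /= Nn; rewrite (@avg_inv P B n a b) //.
    apply: small_diff.
    - by rewrite (fa_ge0 (core_fa cP)) ?(fa_le1 (core_fa cP)) //; exact: (mpre_iterI n a mB).
    - by rewrite (fa_ge0 (core_fa cP)) ?(fa_le1 (core_fa cP)) //; exact: (mpre_iterI 0 a mB).
    - by rewrite invr_ge0 ler0n hN.
  apply/andP; split.
  - apply: (@clus_ge _ _ _ f g _ _ cg (@cont_sub _ _ _ b a)).
    by apply: filterS ev => n /andP[].
  - apply: (@clus_le _ _ _ f g _ _ cg (@cont_sub _ _ _ b a)).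
    by apply: filterS ev => n /andP[].
apply/eqP; rewrite eq_le; apply/andP; split.
- rewrite -subr_le0; apply/ler_addgt0Pr => e e0; rewrite add0r.
  by have /andP[] := h e e0.
- rewrite -subr_ge0; apply/ler_addgt0Pr => e e0.
  by have /andP[h1 _] := h e e0; lra.
Qed.

Lemma cl_leV : B = setT -> forall A, measurable A -> ext g A <= V A.
Proof.
move=> BT A mA; rewrite ext_val.
apply: (@clus_le _ _ _ f g (fun h => h (exist _ A mA)) _ cg (@cont_proj _ _ _ _)).
by apply: ev_all => n; rewrite /f BT; exact: (avg_le_V _ (exist _ A mA) cP).
Qed.

Lemma cl_leQ (Q : set X -> R) :
  (forall A : M, (fun n => avgP P setT n A) @ \oo --> Q (sval A)) ->
  forall A, measurable A -> ext g A <= Q A.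
Proof.
move=> hQ A mA; rewrite ext_val; set a := exist _ A mA.
apply/ler_addgt0Pr => e e0.
apply: (@clus_le _ _ _ f g (fun h => h a) _ cg (@cont_proj _ _ _ _)).
apply: (@ev_sub (fun n => avgP P B n a <= Q A + e) phi hphi).
have := hQ a; move/cvgrPdist_lt => /(_ e e0).
apply: filterS => n hn; apply: le_trans (avg_mono _ _ cP mB) _.
by move: hn; rewrite ltr_distlC => /andP[_ /ltW].
Qed.

End ClusterProps.

Section Rho.
Variables (Q rho : set X -> R) (s : R).
Hypotheses (cQ : core V Q) (frho : fadd rho).
Hypothesis rb : forall A, measurable A -> - Q A <= rho A <= Q A.
Hypothesis rs : forall A, measurable A -> rho A <= s.

Lemma rho_to0 (E : nat -> set X) : (forall n, measurable (E n)) ->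
  (forall n, E n.+1 `<=` E n) -> \bigcap_n E n = set0 -> rho (E n) @[n --> \oo] --> 0.
Proof.
move=> mE dE IE; have h := core_cont0 cQ mE dE IE.
have h' : (fun n => - Q (E n)) @ \oo --> 0.
  by rewrite -oppr0; apply: cvgN.
apply: (squeeze_cvgr _ h' h); apply: nearW => n; exact: rb.
Qed.

Lemma rho_dec (D : nat -> set X) : (forall n, measurable (D n)) ->
  (forall n, D n.+1 `<=` D n) -> rho (D n) @[n --> \oo] --> rho (\bigcap_n D n).
Proof.
move=> mD dD; set Ic := \bigcap_n D n.
have mIc : measurable Ic by apply: bigcap_measurable => //; exists 0%N.
have sI n : Ic `<=` D n by move=> x; apply.
have e n : rho (D n) = rho Ic + rho (D n `\` Ic).
  by have := faddD frho (mD n) mIc (sI n); lra.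
have h : rho (D n `\` Ic) @[n --> \oo] --> 0.
  apply: rho_to0.
  - by move=> n; apply: measurableD.
  - by move=> n x [Dx nIx]; split => //; exact: dD.
  - apply/seteqP; split => x //= h; have [_ nIx] := h 0%N I; apply: nIx.
    by move=> n _; have [] := h n I.
have h2 : (fun n => rho Ic + rho (D n `\` Ic)) @ \oo --> rho Ic + 0.
  by apply: cvgD => //; exact: cvg_cst.
rewrite addr0 in h2; apply: cvg_eqf h2 => n; by rewrite e.
Qed.

Lemma rho_inc (U : nat -> set X) : (forall n, measurable (U n)) ->
  (forall n, U n `<=` U n.+1) -> rho (U n) @[n --> \oo] --> rho (\bigcup_n U n).
Proof.
move=> mU iU; set Jc := \bigcup_n U n.
have mJc : measurable Jc by apply: bigcup_measurable.
have sJ n : U n `<=` Jc by move=> x Ux; exists n.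
have e n : rho (U n) = rho Jc - rho (Jc `\` U n).
  by have := faddD frho mJc (mU n) (sJ n); lra.
have h : rho (Jc `\` U n) @[n --> \oo] --> 0.
  apply: rho_to0.
  - by move=> n; apply: measurableD.
  - by move=> n x [Jx nUx]; split => // Ux; apply: nUx; exact: iU.
  - apply/seteqP; split => x //= h; have [[n _ Unx] _] := h 0%N I.
    by have [_] := h n I.
have h2 : (fun n => rho Jc - rho (Jc `\` U n)) @ \oo --> rho Jc - 0.
  by apply: cvgB => //; exact: cvg_cst.
rewrite subr0 in h2; apply: cvg_eqf h2 => n; by rewrite e.
Qed.

Definition Dmj (A : nat -> set X) m j := \bigcap_(k in [set k | (k <= j)%N]) A (m + k)%N.
Definition Cm (A : nat -> set X) m := \bigcap_k A (m + k)%N.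
Definition liminf_set (A : nat -> set X) := \bigcup_m Cm A m.

Definition w t (k : nat) : R := t * (2 ^+ k)^-1.

Lemma wS t k : w t k.+1 = w t k / 2.
Proof. by rewrite /w exprS invfM mulrA mulrAC. Qed.

Lemma w_ge0 t k : 0 <= t -> 0 <= w t k.
Proof. by move=> t0; rewrite /w mulr_ge0 // invr_ge0 exprn_ge0. Qed.

Lemma rho_liminf (A : nat -> set X) t : (forall k, measurable (A k)) -> 0 <= t ->
  (forall k, s - w t k.+1 <= rho (A k)) -> s <= rho (liminf_set A).
Proof.
move=> mA t0 hA.
have mD m j : measurable (Dmj A m j).
  by apply: bigcap_measurable; [exists 0%N|move=> k _; exact: mA].
have mC m : measurable (Cm A m).
  by apply: bigcap_measurable; [exists 0%N|move=> k _; exact: mA].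
have step1 m j : s - w t m + w t (m + j).+1 <= rho (Dmj A m j).
  elim: j => [|j ih].
    have -> : Dmj A m 0 = A m.
      apply/seteqP; split => x /=; first by move/(_ 0%N); rewrite addn0; apply.
      by move=> Ax [|k] //= _; rewrite addn0.
    by have := hA m; rewrite addn0 wS; lra.
  have -> : Dmj A m j.+1 = Dmj A m j `&` A (m + j.+1)%N.
    rewrite /Dmj; apply/seteqP; split => x /=.
    - move=> h; split; last by apply: h => /=.
      by move=> k /= kj; apply: h => /=; exact: leqW.
    - move=> [h1 h2] k /=; rewrite leq_eqVlt => /orP[/eqP -> //|].
      by rewrite ltnS => kj; apply: h1.
  have := faddUI frho (mD m j) (mA (m + j.+1)%N).
  have mU : measurable (Dmj A m j `|` A (m + j.+1)%N) by exact: measurableU.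
  have := rs mU.
  have := hA (m + j.+1)%N; rewrite addnS !wS.
  move: ih; rewrite wS; lra.
have step2 m : s - w t m <= rho (Cm A m).
  have dD j : Dmj A m j.+1 `<=` Dmj A m j.
    by move=> x h k /= kj; apply: h => /=; exact: leqW.
  have IC : \bigcap_j Dmj A m j = Cm A m.
    apply/seteqP; split => x /=.
    - by move=> h k _; exact: (h k I k (leqnn k)).
    - by move=> h j _ k _; exact: h.
  have := rho_dec (mD m) dD; rewrite IC => hc.
  have cg : closed [set x : R | s - w t m <= x] by exact: closed_ge.
  apply: (closed_cvg _ cg _ _ hc); apply: nearW => j /=.
  by have := step1 m j; have := w_ge0 (m + j).+1 t0; lra.
have iC m : Cm A m `<=` Cm A m.+1.
  by move=> x h k _; rewrite addSn -addnS; exact: h.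
have h3 := rho_inc mC iC.
have wc : w t m @[m --> \oo] --> 0.
  have := @cvg_geometric R t 2^-1; rewrite ger0_norm ?invr_ge0 // invf_lt1 ?ltr0n // ltr1n.
  move=> /(_ isT); apply: cvg_eqf => m /=; by rewrite /w exprVn.
have h4 : (fun m => rho (Cm A m) + w t m) @ \oo --> rho (liminf_set A) + 0.
  by apply: cvgD.
rewrite addr0 in h4.
have cg : closed [set x : R | s <= x] by exact: closed_ge.
apply: (closed_cvg _ cg _ _ h4); apply: nearW => m /=.
by have := step2 m; lra.
Qed.

End Rho.

Lemma claimK (Q mu : set X -> R) : core V Q -> invariant_fun T Q ->
  (forall E, invariant_sets T E -> Q E = 0 \/ Q E = 1) ->
  fadd mu -> (forall A, measurable A -> 0 <= mu A <= Q A) -> invariant_fun T mu ->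
  forall A, measurable A -> mu A = mu setT * Q A.
Proof.
move=> cQ iQ eQ fmu bmu imu.
have fQ := core_fa cQ.
have Q1 : Q setT = 1 by case: fQ.
set c := mu setT.
have c01 : 0 <= c <= 1 by rewrite -Q1; exact: bmu.
pose rho A := mu A - c * Q A.
have frho : fadd rho.
  move=> A B mA mB AB; rewrite /rho fmu // (fa_fadd fQ) // mulrDr; lra.
have rb A : measurable A -> - Q A <= rho A <= Q A.
  move=> mA; have /andP[m0 mQ] := bmu A mA; have Q0 := fa_ge0 fQ mA.
  have /andP[c0 c1] := c01.
  have h1 : 0 <= c * Q A by exact: mulr_ge0.
  have h2 : c * Q A <= Q A by exact: ler_piMl.
  rewrite /rho; apply/andP; split; lra.
have irho : invariant_fun T rho.
  by move=> A mA; rewrite /rho imu // iQ.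
have rT : rho setT = 0 by rewrite /rho Q1 mulr1 subrr.
pose S := [set rho A | A in measurable].
have hs : has_sup S.
  split; first by exists (rho set0); exists set0.
  exists 1 => _ [A mA <-]; have /andP[_ h] := rb A mA.
  exact: le_trans h (fa_le1 fQ mA).
set s := sup S.
have rs A : measurable A -> rho A <= s.
  by move=> mA; apply: sup_upper_bound => //; exists A.
have [Af hAf] : {Af : nat -> set X & forall k,
    measurable (Af k) /\ s - w 1 k.+1 <= rho (Af k)}.
  apply: (@choice nat (set X) (fun k A => measurable A /\ s - w 1 k.+1 <= rho A)) => k.
  have e0 : 0 < w 1 k.+1 by rewrite /w mul1r invr_gt0 exprn_gt0.
  have [_ [A mA <-] hA] := sup_adherent e0 hs.
  by exists A; split => //; exact: ltW.
have mAf k : measurable (Af k) by case: (hAf k).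
have mLim (A : nat -> set X) : (forall k, measurable (A k)) -> measurable (liminf_set A).
  move=> mA; apply: bigcup_measurable => m _.
  by apply: bigcap_measurable; [exists 0%N|move=> k _; exact: mA].
pose D := liminf_set Af.
have mD : measurable D by exact: mLim.
have sD : s <= rho D.
  apply: (rho_liminf cQ frho rb rs mAf ler01) => k; by case: (hAf k).
pose A' k := iter k T @^-1` D.
have mA' k : measurable (A' k) by exact: mpre_iter.
pose E := liminf_set A'.
have mE : measurable E by exact: mLim.
have sE : s <= rho E.
  apply: (rho_liminf cQ frho rb rs mA' (lexx 0)) => k.
  by rewrite /A' (inv_iter k irho mD) /w mul0r subr0.
have iE : invariant_sets T E.
  split => //; apply/seteqP; split => x /=.
  - move=> [m _ h]; exists m.+1 => // k _; rewrite /A' /=.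
    by have := h k I; rewrite /A' /= -iterSr.
  - move=> [m _ h]; exists m => // k _; rewrite /A' /= -iterSr -addnS.
    exact: h.
have s0 : s <= 0.
  case: (eQ E iE) => QE.
  - by have /andP[_ h] := rb E mE; lra.
  - have mCE : measurable (~` E) by exact: measurableC.
    have QC : Q (~` E) = 0 by rewrite fa_compl // QE subrr.
    have := frho E (~` E) mE mCE (setICr E); rewrite setUCr rT.
    by have /andP[h _] := rb _ mCE; lra.
move=> A mA; have mCA : measurable (~` A) by exact: measurableC.
have := frho A (~` A) mA mCA (setICr A); rewrite setUCr rT.
have := rs A mA; have := rs _ mCA; rewrite /rho; lra.
Qed.


Lemma uniqQ (Q1 Q2 : set X -> R) : ergodic_cap T V ->
  core V Q1 -> invariant_fun T Q1 -> core V Q2 -> invariant_fun T Q2 ->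
  forall A, measurable A -> Q1 A = Q2 A.
Proof.
move=> eV c1 i1 c2 i2.
have [[f11 f12 f13] PV1] := c1; have [[f21 f22 f23] PV2] := c2.
pose Mq A := (Q1 A + Q2 A) / 2.
have cM : core V Mq.
  split; first split.
  - by rewrite /Mq f11 f21; lra.
  - by move=> A mA; have := f12 A mA; have := f22 A mA; rewrite /Mq; lra.
  - by move=> A B mA mB AB; rewrite /Mq f13 // f23 //; lra.
  - by move=> A mA; have := PV1 A mA; have := PV2 A mA; rewrite /Mq; lra.
have iM : invariant_fun T Mq by move=> A mA; rewrite /Mq i1 // i2.
pose mu A := Q1 A / 2.
have h := @claimK Mq mu cM iM (core_erg eV cM).
have fmu : fadd mu by move=> B C mB mC BC; rewrite /mu f13 //; lra.
have bmu : forall B, measurable B -> 0 <= mu B <= Mq B.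
  by move=> B mB; have := f12 B mB; have := f22 B mB; rewrite /mu /Mq; lra.
have imu : invariant_fun T mu by move=> B mB; rewrite /mu i1.
move=> A mA; have := h fmu bmu imu A mA.
rewrite /mu /Mq f11; lra.
Qed.

Lemma existsQ : exists Q, core V Q /\ invariant_fun T Q.
Proof.
have [L [Lc _ _ hL]] := L_core.
have [P0 LP0 _] := hL setT measurableT.
have cP0 := Lc _ LP0.
have [g [_ cg]] := @exists_cluster _ _ _ (fun k => avgP P0 setT ((fun k => k) k))
  (fun n => avg_K01 n cP0 measurableT).
have hphi : forall k, (k <= (fun k => k) k)%N by [].
exists (ext g); split; last exact: (cl_inv cP0 measurableT hphi cg).
split; [split|].
- rewrite (cl_setT hphi cg); by case: (core_fa cP0).
- by move=> A mA; have /andP[] := cl_01 cP0 measurableT cg mA.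
- exact: (cl_fadd cP0 measurableT cg).
- exact: (cl_leV cP0 cg erefl).
Qed.

Lemma cont_dist (a : M) (l : R) : continuous (fun h : FS => `|l - h a|).
Proof.
move=> h; apply: (@continuous_comp _ _ _ (fun h : FS => l - h a) (Num.norm)).
- have h1 := @cont_proj _ _ _ a h; have := cvgB (cvg_cst l) h1; exact.
- exact: norm_continuous.
Qed.

Lemma conv_gen (f : nat -> FS) (a : M) (l : R) : (forall n, K01 (f n)) ->
  (forall phi, (forall k, (k <= phi k)%N) -> forall g,
     cluster ((fun k => f (phi k)) @ \oo) g -> g a = l) ->
  (fun n => f n a) @ \oo --> l.
Proof.
move=> hK hg; apply/cvgrPdist_lt => e e0; apply: contrapT => hne.
have hN : forall N, exists n, (N <= n)%N /\ e <= `|l - f n a|.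
  move=> N; apply: contrapT => hn; apply: hne; exists N => // n /= Nn.
  rewrite ltNge; apply/negP => le; apply: hn; exists n; split => //.
have [phi hphi] := @choice nat nat (fun N n => (N <= n)%N /\ e <= `|l - f n a|) hN.
have [g [_ cg]] := @exists_cluster _ _ _ (fun k => f (phi k)) (fun n => hK (phi n)).
have := hg phi (fun k => (hphi k).1) g cg => ga.
have : e <= `|l - g a|.
  apply: (@clus_ge _ _ _ (fun k => f (phi k)) g _ e cg (@cont_dist a l)).
  by apply: ev_all => k; exact: (hphi k).2.
by rewrite ga subrr normr0 leNgt e0.
Qed.

Lemma ext_sval (g : FS) (a : M) : ext g (sval a) = g a.
Proof. by case: a => A mA; rewrite ext_val. Qed.

Section Conv.
Variable Q : set X -> R.
Hypotheses (eV : ergodic_cap T V) (cQ : core V Q) (iQ : invariant_fun T Q).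

Lemma conv_setT P (a : M) : core V P ->
  (fun n => avgP P setT n a) @ \oo --> Q (sval a).
Proof.
move=> cP; apply: conv_gen; first by move=> n; exact: avg_K01.
move=> phi hphi g cg.
have cg' : core V (ext g).
  split; [split|].
  - rewrite (cl_setT hphi cg); by case: (core_fa cP).
  - by move=> A mA; have /andP[] := cl_01 cP measurableT cg mA.
  - exact: (cl_fadd cP measurableT cg).
  - exact: (cl_leV cP cg erefl).
have := uniqQ eV cg' (cl_inv cP measurableT hphi cg) cQ iQ (svalP a).
by rewrite ext_sval.
Qed.

Lemma conv_all P B (a : M) : core V P -> measurable B ->
  (fun n => avgP P B n a) @ \oo --> P B * Q (sval a).
Proof.
move=> cP mB; apply: conv_gen; first by move=> n; exact: avg_K01.
move=> phi hphi g cg.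
have b : forall A, measurable A -> 0 <= ext g A <= Q A.
  move=> A mA; have /andP[h _] := cl_01 cP mB cg mA.
  rewrite h /=; apply: (cl_leQ cP mB hphi cg) => // A'.
  exact: conv_setT.
have := @claimK Q (ext g) cQ iQ (core_erg eV cQ) (cl_fadd cP mB cg) b
  (cl_inv cP mB hphi cg) _ (svalP a).
by rewrite ext_sval (cl_setT hphi cg).
Qed.

End Conv.

Lemma inv_iter_set E : T @^-1` E = E -> forall i, iter i T @^-1` E = E.
Proof.
move=> h; elim => [|i ih] //.
have -> : iter i.+1 T @^-1` E = iter i T @^-1` (T @^-1` E) by [].
by rewrite h ih.
Qed.

Lemma lim_const (P : set X -> R) (B C : set X) (x : R) : (forall i, P (B `&` iter i T @^-1` C) = x) ->
  (fun n : nat => n%:R^-1 * \sum_(i < n) P (B `&` (iter i T) @^-1` C)) @ \oo --> x.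
Proof.
move=> h; apply: cvg_near_cst; exists 1%N => // n /= n1.
under eq_bigr do rewrite h.
rewrite sumr_const card_ord -[x *+ n]mulr_natr mulrCA mulVf ?mulr1 //.
by rewrite pnatr_eq0 -lt0n.
Qed.

Lemma main_equiv : [<-> ergodic_cap T V;
  exists2 Q, (core V `&` MeT T) Q & forall P, core V P -> avg_limit T P Q;
  exists2 Q, (core V `&` MT T) Q & forall P, core V P -> avg_limit T P Q].
Proof.
tfae.
- move=> eV; have [Q [cQ iQ]] := existsQ.
  exists Q; first split => //.
    split; first by split => //; exact: core_prob.
    exact: core_erg eV cQ.
  move=> P cP B C mB mC.
  exact: (@conv_all Q eV cQ iQ P B (exist _ C mC) cP mB).
- by move=> [Q [cQ [mQ _]] h]; exists Q.
- move=> [Q [cQ [pQ iQ]] hlim] B iB; have [mB TB] := iB.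
  have mCB : measurable (~` B) by exact: measurableC.
  have TCB : T @^-1` (~` B) = ~` B by rewrite -{2}TB.
  have e1 P : core V P -> P B = P B * Q B.
    move=> cP; have := hlim P cP B B mB mB.
    have hc : forall i, P (B `&` iter i T @^-1` B) = P B.
      by move=> i; rewrite inv_iter_set // setIid.
    move=> h2; have h1 := lim_const hc.
    exact: (cvgR_uniq h1 h2).
  have e2 P : core V P -> 0 = P B * Q (~` B).
    move=> cP; have := hlim P cP B (~` B) mB mCB.
    have hc : forall i, P (B `&` iter i T @^-1` (~` B)) = 0.
      by move=> i; rewrite inv_iter_set // setICr (fadd0 (fa_fadd (core_fa cP))).
    move=> h2; have h1 := lim_const hc.
    exact: (cvgR_uniq h1 h2).
  have e3 P : core V P -> 0 = P (~` B) * Q B.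
    move=> cP; have := hlim P cP (~` B) B mCB mB.
    have hc : forall i, P (~` B `&` iter i T @^-1` B) = 0.
      by move=> i; rewrite inv_iter_set // setICl (fadd0 (fa_fadd (core_fa cP))).
    move=> h2; have h1 := lim_const hc.
    exact: (cvgR_uniq h1 h2).
  have fQ := core_fa cQ.
  have QC : Q (~` B) = 1 - Q B by rewrite fa_compl.
  have [L [Lc _ _ hL]] := L_core.
  have QB : Q B = 0 \/ Q B = 1.
    have := e1 Q cQ => h; have : Q B * (Q B - 1) = 0 by rewrite mulrBr mulr1 -h subrr.
    by move/eqP; rewrite mulf_eq0 subr_eq0 => /orP[/eqP|/eqP]; [left|right].
  case: QB => QB.
  - have PB P : core V P -> P B = 0 by move=> cP; rewrite (e1 P cP) QB mulr0.
    have [P LP PV] := hL B mB; have VB : V B = 0 by rewrite -PV PB //; exact: Lc.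
    by split; left.
  - have PC P : core V P -> P (~` B) = 0.
      by move=> cP; have := e3 P cP; rewrite QB mulr1.
    have [P LP PV] := hL (~` B) mCB.
    have VC : V (~` B) = 0 by rewrite -PV PC //; exact: Lc.
    have [P' LP' PV'] := hL B mB.
    have VB : V B = 1.
      have cP' := Lc _ LP'; have := PC P' cP'.
      by rewrite fa_compl ?PV' //; [lra|exact: core_fa].
    by split; right.
Qed.

End Main.

Theorem theorem4p4 (d : measure_display) (X : measurableType d) (R : realType)
  (T : X -> X) (V : set X -> R) :
  measurable_fun setT T ->
  upper_probability V ->
  invariant_fun T V ->
  [<-> ergodic_cap T V;
       exists2 Q, (core V `&` MeT T) Q & forall P, core V P -> avg_limit T P Q;
       exists2 Q, (core V `&` MT T) Q & forall P, core V P -> avg_limit T P Q].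
Proof.
move=> mT uV iV; exact: (main_equiv mT uV iV).
Qed.
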